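(* Let $\eta\in(0,1)$ be a constant. For any integers $k,d,s$ satisfying $s=k^{1-\eta}$ and $k\ge\log d+o(k)+O_\eta(1)$ (in particular, $k\ge 2^{2/\eta}$), every $(k,d,s)$-CNF formula is $\theta$-resilient for some $\theta>0$ depending only on $k$ and $\eta$.
   Context: $\log$ denotes $\log_2$. A $(k,d,s)$-CNF formula $\Phi=(V,\mathcal C)$ is a CNF formula in which every clause contains exactly $k$ distinct variables, every variable appears in at most $d$ clauses, and any two distinct clauses share at most $s$ variables. For a clause $c$ on a set $\mathrm{vbl}(c)$ of $k$ distinct variables, its forbidden assignment is the unique assignment of $\mathrm{vbl}(c)$ violating $c$. $\mu_\Phi$ is the uniform distribution over satisfying assignments of $\Phi$. $\Phi$ is $\theta$-resilient if for every clause $c^*\notin\mathcal C$ on $k$ distinct variables with forbidden assignment $\sigma^*$, $\Pr_{X\sim\mu_\Phi}[X_{\mathrm{vbl}(c^* )}=\sigma^*]$ is either $0$ or at least $\theta$. (The paper writes this conclusion as ''$O_{k,\eta}(1)$-resilient''.) *)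

(* Defs.v *)
From mathcomp Require Import all_boot.
From Stdlib Require Import Reals.

Set Implicit Arguments.
Unset Strict Implicit.
Unset Printing Implicit Defensive.

(* A clause over the variable set V is encoded by the map
   c : V -> option bool, where c v = Some b means that v occurs in c and
   the forbidden assignment of c sets v to b; c v = None means v does not
   occur in c.  This encoding is canonical: a clause is determined by its
   variable set vbl(c) and its forbidden assignment on vbl(c). *)
Definition clause (V : finType) := {ffun V -> option bool}.

Definition vbl (V : finType) (c : clause V) : {set V} :=
  [set v | c v != None].

Definition cnf (V : finType) := {set clause V}.

Definition assignment (V : finType) := {ffun V -> bool}.

Definition violates (V : finType) (c : clause V) (x : assignment V) : bool :=
  [forall v, if c v is Some b then x v == b else true].

Definition satisfies (V : finType) (F : cnf V) (x : assignment V) : bool :=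
  [forall c in F, ~~ violates c x].

Definition is_kds_cnf (V : finType) (k d s : nat) (F : cnf V) : Prop :=
  (forall c, c \in F -> #|vbl c| = k) /\
  (forall v : V, #|[set c in F | v \in vbl c]| <= d) /\
  (forall c1 c2, c1 \in F -> c2 \in F -> c1 != c2 ->
       #|vbl c1 :&: vbl c2| <= s).

(* Pr_{X ~ mu_F}[X_{vbl(c)} = forbidden assignment of c], where mu_F is the
   uniform distribution on satisfying assignments of F.  (If F is
   unsatisfiable this evaluates to 0/0 = 0 in Stdlib's reals.) *)
Definition prob_violate (V : finType) (F : cnf V) (c : clause V) : R :=
  (INR #|[set x : assignment V | satisfies F x && violates c x]|
   / INR #|[set x : assignment V | satisfies F x]|)%R.

Definition resilient (V : finType) (k : nat) (theta : R) (F : cnf V) : Prop :=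
  forall c : clause V, #|vbl c| = k -> c \notin F ->
    prob_violate F c = 0%R \/ (theta <= prob_violate F c)%R.

Definition log2 (x : R) : R := (ln x / ln 2)%R.

(* Main.v *)
From HB Require Import structures.
From mathcomp Require Import all_boot.
From Stdlib Require Import Reals Lra Lia ZArith.
From mathcomp Require Import zify.
Import ssrnat.
Require Import Defs.

Set Implicit Arguments.
Unset Strict Implicit.
Unset Printing Implicit Defensive.



Section Cyl.
Variable V : finType.
Implicit Types (x y : assignment V) (U : {set V}) (E : {set assignment V}).

Definition agree_off U x y := forall v, v \notin U -> x v = y v.
Definition inv_on U E := forall x y, agree_off U x y -> (x \in E) = (y \in E).

Definition flip (v : V) x : assignment V := [ffun w => if w == v then ~~ x w else x w].

Lemma flipK v : involutive (flip v).
Proof. by move=> x; apply/ffunP=> w; rewrite !ffunE; case: eqP => // _; rewrite negbK. Qed.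

Lemma cyl_count n : forall U E (sg : assignment V), #|U| = n -> inv_on U E ->
  2 ^ n * #|[set x in E | [forall v in U, x v == sg v]]| = #|E|.
Proof.
elim: n => [|n IH] U E sg hU hE.
  rewrite mul1n; congr #|pred_of_set _|.
  apply/setP=> x; rewrite !inE.
  case: (x \in E) => //=; apply/forallP=> v; apply/implyP=> vU.
  by move: hU => /eqP; rewrite cards_eq0 => /eqP U0; rewrite U0 inE in vU.
have [v vU] : exists v, v \in U.
  by apply/set0Pn; rewrite -card_gt0 hU.
set U' := U :\ v.
have hU' : #|U'| = n by move: hU; rewrite (cardsD1 v U) vU add1n => -[].
set E' := [set x in E | x v == sg v].
have hE' : inv_on U' E'.
  move=> x y hxy; rewrite !inE (hE x y); last first.
    by move=> w wU; apply: hxy; rewrite !inE (negbTE wU) andbF.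
  by rewrite hxy // !inE eqxx.
have key := IH U' E' sg hU' hE'.
have -> : [set x in E | [forall v in U, x v == sg v]] =
          [set x in E' | [forall v in U', x v == sg v]].
  apply/setP=> x; rewrite !inE.
  case xE: (x \in E) => //=.
  apply/forallP/andP.
    move=> h; split; first by move: (h v); rewrite vU.
    by apply/forallP=> w; apply/implyP; rewrite !inE => /andP[_ wU]; move: (h w); rewrite wU.
  move=> [hv /forallP h] w; apply/implyP=> wU.
  case: (eqVneq w v) => [->//|wv].
  by move: (h w); rewrite !inE wv wU.
set E'' := [set x in E | x v != sg v].
have cE : #|E| = #|E'| + #|E''|.
  rewrite -(cardsID [set x : assignment V | x v == sg v] E).
  have -> : E' = E :&: [set x : assignment V | x v == sg v] by apply/setP=> x; rewrite !inE.
  have -> : E'' = E :\: [set x : assignment V | x v == sg v] by apply/setP=> x; rewrite !inE andbC.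
  by [].
have cE'' : #|E''| = #|E'|.
  have fi : injective (flip v) := can_inj (flipK v).
  rewrite -(card_imset _ fi); congr #|pred_of_set _|.
  apply/setP=> x; apply/imsetP/idP.
    move=> [y]; rewrite !inE => /andP[yE yv] ->.
    rewrite ffunE eqxx; rewrite (hE (flip v y) y) ?yE /=.
      by move: yv; case: (y v); case: (sg v).
    by move=> w wU; rewrite ffunE; case: eqP => // e; rewrite e vU in wU.
  rewrite !inE => /andP[xE xv]; exists (flip v x); last by rewrite flipK.
  rewrite !inE ffunE eqxx; rewrite (hE (flip v x) x) ?xE /=.
    by move: xv; case: (x v); case: (sg v).
  by move=> w wU; rewrite ffunE; case: eqP => // e; rewrite e vU in wU.
by rewrite cE cE'' -key expnS -mulnA mul2n -addnn.
Qed.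
End Cyl.



HB.instance Definition _ := Monoid.isComLaw.Build R 1%R Rmult (fun a b c => esym (Rmult_assoc a b c)) Rmult_comm Rmult_1_l.

Lemma natRM m n : INR (m * n) = (INR m * INR n)%R.
Proof. by rewrite mulnE; apply: mult_INR. Qed.
Lemma natRD m n : INR (m + n) = (INR m + INR n)%R.
Proof. by rewrite addnE; apply: plus_INR. Qed.
Lemma natR2X n : INR (2 ^ n) = (2 ^ n)%R.
Proof.
elim: n => [|n IH]; first by rewrite expn0 /=.
by rewrite expnS natRM IH /=.
Qed.
Lemma natR_le m n : m <= n -> (INR m <= INR n)%R.
Proof. by move/leP; apply: le_INR. Qed.

Section LLL.
Variable V : finType.
Variable B : clause V.

Definition okT (T : {set clause V}) (a : assignment V) := [forall c in T, ~~ violates c a].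
Definition mu (P : pred (assignment V)) : R := INR #|[set a | P a && violates B a]|.
Definition Uc (c : clause V) := vbl c :\: vbl B.
Definition nbr (c j : clause V) := [exists v in Uc c, v \in vbl j].

Lemma mu_ge0 P : (0 <= mu P)%R.
Proof. exact: pos_INR. Qed.

Lemma mu_mono (P Q : pred (assignment V)) : (forall a, P a -> Q a) -> (mu P <= mu Q)%R.
Proof.
move=> h; apply: natR_le; apply: subset_leq_card; apply/subsetP=> a.
by rewrite !inE => /andP[/h -> ->].
Qed.

Lemma okTU1 j T a : okT (j |: T) a = ~~ violates j a && okT T a.
Proof.
rewrite /okT; apply/forallP/andP.
  move=> h; split; first by move: (h j); rewrite !inE eqxx.
  by apply/forallP=> c; apply/implyP=> cT; move: (h c); rewrite !inE cT orbT.
move=> [vj /forallP h] c; apply/implyP.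
by rewrite !inE => /orP[/eqP->//|cT]; move: (h c); rewrite cT.
Qed.

Lemma mu_split j T : (mu (okT (j |: T)) + mu (fun a => violates j a && okT T a) = mu (okT T))%R.
Proof.
rewrite /mu -natRD; congr INR.
rewrite -(cardsID [set a | violates j a] [set a | okT T a && violates B a]).
rewrite addnC; congr (_ + _); congr #|pred_of_set _|; apply/setP=> a; rewrite !inE ?okTU1;
  by case: (violates j a); case: (okT T a); case: (violates B a).
Qed.

Lemma violates_agree (c : clause V) (a b : assignment V) : (forall v, v \in vbl c -> a v = b v) -> violates c a = violates c b.
Proof.
move=> h; apply/forallP/forallP=> H v; move: (H v) (h v); rewrite /vbl inE;
  case: (c v) => //= bb e /(_ isT) ee; by rewrite ?ee // -ee.
Qed.

Lemma indep c (M : {set clause V}) : (forall j, j \in M -> ~~ nbr c j) ->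
  (2 ^ #|Uc c| * mu (fun a => violates c a && okT M a) <= mu (okT M))%R.
Proof.
move=> hM.
set E := [set a | okT M a && violates B a].
set sg : assignment V := [ffun v => if c v is Some b then b else false].
have hE : inv_on (Uc c) E.
  move=> a b hab; rewrite !inE; congr andb.
    apply/forallP/forallP=> H j; apply/implyP=> jM; move: (H j); rewrite jM /=;
      rewrite (@violates_agree j a b) // => v vj; apply: hab; apply/negP=> vU;
      move: (hM j jM) => /existsP; apply; by exists v; rewrite vU vj.
  apply: (@violates_agree B a b) => v vB; apply: hab; by rewrite inE vB.
have := cyl_count sg (erefl _) hE.
move=> eq.
rewrite /mu -natR2X -natRM; apply: natR_le.
rewrite -/E -eq leq_mul2l; apply/orP; right.
apply: subset_leq_card; apply/subsetP=> a; rewrite !inE => /andP[/andP[vc oM] vB].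
rewrite oM vB /=; apply/forallP=> v; apply/implyP; rewrite inE => /andP[_ vv].
move/forallP: vc => /(_ v); rewrite ffunE; move: vv; rewrite /vbl inE.
by case: (c v).
Qed.

Variable G : {set clause V}.
Variable x : clause V -> R.
Hypothesis hx : forall c, c \in G -> (0 <= x c <= 1)%R.
Definition Nb c := [set j in G | (j != c) && nbr c j].
Hypothesis hcond : forall c, c \in G ->
  (1 <= 2 ^ #|Uc c| * x c * \big[Rmult/1%R]_(j in Nb c) (1 - x j))%R.

Lemma prod_ge0 (P : {set clause V}) : P \subset G -> (0 <= \big[Rmult/1%R]_(j in P) (1 - x j))%R.
Proof.
move=> sPG; apply: (big_ind (fun r => 0 <= r)%R); first lra.
  by move=> r1 r2 h1 h2; apply: Rmult_le_pos.
by move=> j jP; have := hx (subsetP sPG j jP); lra.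
Qed.

Definition lll_at n := forall (T : {set clause V}) c, #|T| <= n -> T \subset G -> c \in G -> c \notin T ->
  (mu (fun a => violates c a && okT T a) <= x c * mu (okT T))%R.

Lemma peel n : (forall m, m < n -> lll_at m) ->
  forall P Q : {set clause V}, P \subset G -> Q \subset G -> [disjoint P & Q] -> #|P :|: Q| <= n ->
  (\big[Rmult/1%R]_(j in P) (1 - x j) * mu (okT Q) <= mu (okT (P :|: Q)))%R.
Proof.
move=> IH P; elim: {P}#|P| {-2}P (erefl #|P|) => [|m IHm] P hP Q sPG sQG dPQ hn.
  move: hP => /eqP; rewrite cards_eq0 => /eqP ->; rewrite big_set0 set0U; lra.
have [j jP] : exists j, j \in P by apply/set0Pn; rewrite -card_gt0 hP.
set P' := P :\ j.
have hP' : #|P'| = m by move: hP; rewrite (cardsD1 j P) jP add1n => -[].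
have sP'G : P' \subset G by apply: subset_trans sPG; apply: subsetDl.
have dP'Q : [disjoint P' & Q] by apply: disjointWl dPQ; apply: subsetDl.
have eP : P = j |: P' by rewrite setD1K.
have jnP' : j \notin P' by rewrite !inE eqxx.
have jG : j \in G by apply: (subsetP sPG).
have jQ : j \notin Q.
  by move: dPQ; rewrite disjoints_subset => /subsetP /(_ j jP); rewrite inE.
have jT : j \notin P' :|: Q by rewrite in_setU negb_or jnP' jQ.
have hT : #|P' :|: Q| < n.
  apply: leq_trans hn; apply: proper_card; apply/properP; split.
    by apply: setSU; apply: subsetDl.
  by exists j => //; rewrite in_setU jP.
have IH1 := IHm P' hP' Q sP'G sQG dP'Q (ltnW (leq_trans hT (leqnn n))).
have sTG : P' :|: Q \subset G by rewrite subUset sP'G sQG.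
have L := IH _ hT (P' :|: Q) j (leqnn _) sTG jG jT.
have S := mu_split j (P' :|: Q).
rewrite eP big_setU1 //= -setUA.
have := hx jG; move=> [hx0 hx1].
have := prod_ge0 sP'G => hp.
have := mu_ge0 (okT Q) => hq.
set pp := \big[Rmult/1%R]_(i in P') (1 - x i)%R in IH1 hp *.
apply: Rle_trans (_ : (1 - x j) * mu (okT (P' :|: Q)) <= _)%R.
  rewrite Rmult_assoc; apply: Rmult_le_compat_l; lra.
lra.
Qed.

Lemma prod_le1 (P : {set clause V}) : P \subset G -> (\big[Rmult/1%R]_(j in P) (1 - x j) <= 1)%R.
Proof.
move=> sPG; suff: (0 <= \big[Rmult/1%R]_(j in P) (1 - x j) <= 1)%R by case.
apply: (big_ind (fun r => 0 <= r <= 1)%R); first lra.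
  by move=> r1 r2 h1 h2; split; [apply: Rmult_le_pos; lra|
     rewrite -(Rmult_1_l 1); apply: Rmult_le_compat; lra].
by move=> j jP; have := hx (subsetP sPG j jP); lra.
Qed.

Lemma prod_anti (A A' : {set clause V}) : A \subset A' -> A' \subset G ->
  (\big[Rmult/1%R]_(j in A') (1 - x j) <= \big[Rmult/1%R]_(j in A) (1 - x j))%R.
Proof.
move=> sA sA'.
rewrite (big_setID A) /= (setIidPr sA).
have h1 := prod_le1 (subset_trans (subsetDl A' A) sA').
have h0 := prod_ge0 (subset_trans sA sA').
have h2 := prod_ge0 (subset_trans (subsetDl A' A) sA').
rewrite -{2}(Rmult_1_r (\big[Rmult/1%R]_(j in A) (1 - x j))%R).
by apply: Rmult_le_compat_l.
Qed.

Lemma lll_all n : lll_at n.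
Proof.
elim/ltn_ind: n => n IH T c hT sTG cG cT.
set N := T :&: [set j | nbr c j].
set M := T :\: [set j | nbr c j].
have eT : N :|: M = T by apply: setID.
have sNG : N \subset G by apply: subset_trans sTG; apply: subsetIl.
have sMG : M \subset G by apply: subset_trans sTG; apply: subsetDl.
have dNM : [disjoint N & M].
  rewrite disjoints_subset; apply/subsetP=> j; rewrite !inE => /andP[_ h].
  by rewrite h.
have hP := peel IH sNG sMG dNM.
rewrite eT in hP; have {}hP := hP hT.
have hM : forall j, j \in M -> ~~ nbr c j by move=> j; rewrite !inE => /andP[].
have hI := indep hM.
have hmono : (mu (fun a => violates c a && okT T a) <= mu (fun a => violates c a && okT M a))%R.
  apply: mu_mono => a /andP[-> /forallP h] /=; apply/forallP=> j; apply/implyP=> jM.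
  by move: (h j); rewrite (subsetP (subsetDl T _) j jM).
have hsub : N \subset Nb c.
  apply/subsetP=> j; rewrite !inE => /andP[jT ->]; rewrite (subsetP sTG j jT) andbT /=.
  by apply/eqP=> e; rewrite -e jT in cT.
have sNbG : Nb c \subset G by apply/subsetP=> j; rewrite inE => /andP[].
have hpi := prod_anti hsub sNbG.
have hc := hcond cG.
have hxc := hx cG.
have a0 := mu_ge0 (fun a => violates c a && okT T a).
have m0 := mu_ge0 (okT M).
have pi0 := prod_ge0 sNbG.
have u0 : (0 < 2 ^ #|Uc c|)%R by apply: pow_lt; lra.
set a := mu (fun a => violates c a && okT T a) in a0 hmono *.
set a' := mu (fun a => violates c a && okT M a) in hI hmono.
set m := mu (okT M) in m0 hI hP.
set t := mu (okT T) in hP *.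
set u := (2 ^ #|Uc c|)%R in u0 hI hc.
set pi := \big[Rmult/1%R]_(j in Nb c) (1 - x j)%R in hc hpi pi0.
set piN := \big[Rmult/1%R]_(j in N) (1 - x j)%R in hpi hP.
apply: (Rle_trans _ (x c * pi * m)).
  apply: (Rle_trans _ (u * x c * pi * a')).
    rewrite -[a]Rmult_1_l; apply: Rmult_le_compat => //; lra.
  have : (x c * pi * (u * a') <= x c * pi * m)%R.
    apply: Rmult_le_compat_l => //; apply: Rmult_le_pos; lra.
  lra.
apply: (Rle_trans _ (x c * (piN * m))).
  rewrite Rmult_assoc; apply: Rmult_le_compat_l; first lra.
  by apply: Rmult_le_compat_r.
by apply: Rmult_le_compat_l; lra.
Qed.

Lemma lll_prod (P Q : {set clause V}) : P \subset G -> Q \subset G -> [disjoint P & Q] ->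
  (\big[Rmult/1%R]_(j in P) (1 - x j) * mu (okT Q) <= mu (okT (P :|: Q)))%R.
Proof.
move=> sP sQ dPQ; apply: (@peel #|P :|: Q|) => //.
by move=> m _; apply: lll_all.
Qed.
End LLL.



HB.instance Definition _ := Monoid.isComLaw.Build R 0%R Rplus (fun a b c => esym (Rplus_assoc a b c)) Rplus_comm Rplus_0_l.

Section Aux.
Variable I : finType.
Implicit Type A : {set I}.

Lemma sum_le_const A (f : I -> R) (b : R) : (forall i, i \in A -> f i <= b)%R ->
  (\big[Rplus/0%R]_(i in A) f i <= INR #|A| * b)%R.
Proof.
move=> h.
have -> : (INR #|A| * b = \big[Rplus/0%R]_(i in A) b)%R.
  rewrite big_const; elim: #|A| => [|n IH] /=; first lra.
  rewrite -IH; case: n {IH} => [|n] /=; lra.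
apply: (big_ind2 (fun r1 r2 => r1 <= r2)%R); first lra.
  by move=> *; lra.
by [].
Qed.

Lemma prod_ge_sum A (f : I -> R) : (forall i, i \in A -> 0 <= f i <= 1)%R ->
  (1 - \big[Rplus/0%R]_(i in A) f i <= \big[Rmult/1%R]_(i in A) (1 - f i))%R.
Proof.
move=> h.
suff: ((fun p s => 0 <= p <= 1 /\ 0 <= s /\ 1 - s <= p)
   (\big[Rmult/1%R]_(i in A) (1 - f i)) (\big[Rplus/0%R]_(i in A) f i))%R by case=> _ [].
apply: (big_ind2 (fun p s => 0 <= p <= 1 /\ 0 <= s /\ 1 - s <= p)%R).
- lra.
- move=> p1 s1 p2 s2 [h1 [h2 h3]] [h4 [h5 h6]]; split; [split|split].
  + nra.
  + nra.
  + lra.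
  + case: (Rle_lt_dec 1 s1) => ?; first nra.
    case: (Rle_lt_dec 1 s2) => ?; first nra.
    nra.
- by move=> i iA; have := h i iA; lra.
Qed.

Lemma prod_ge_pow A (f : I -> R) (b : R) : (0 <= b)%R -> (forall i, i \in A -> b <= f i)%R ->
  (b ^ #|A| <= \big[Rmult/1%R]_(i in A) f i)%R.
Proof.
move=> b0 h.
rewrite -sum1_card.
suff: ((fun r n => 0 <= b ^ n <= r)%R (\big[Rmult/1%R]_(i in A) f i) (\sum_(i in A) 1)) by case.
apply: (big_ind2 (fun r n => 0 <= b ^ n <= r)%R).
- simpl; lra.
- move=> r1 n1 r2 n2 [h1 h2] [h3 h4]; rewrite pow_add; split.
    by apply: Rmult_le_pos.
  by apply: Rmult_le_compat.
- move=> i iA; split; first by apply: pow_le.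
  by rewrite /= Rmult_1_r; apply: h.
Qed.
End Aux.

Lemma card_bigcup_le (I T : finType) (A : {set I}) (Fm : I -> {set T}) m :
  (forall i, i \in A -> #|Fm i| <= m) -> #|\bigcup_(i in A) Fm i| <= #|A| * m.
Proof.
move=> h; rewrite -sum_nat_const.
apply: (big_ind2 (fun (X : {set T}) n => #|X| <= n)).
- by rewrite cards0.
- move=> X1 n1 X2 n2 h1 h2; rewrite cardsU; apply: leq_trans (leq_subr _ _) _.
  exact: leq_add.
- exact: h.
Qed.

Lemma pow_anti (b : R) n m : (0 <= b <= 1)%R -> n <= m -> (b ^ m <= b ^ n)%R.
Proof.
move=> hb nm; rewrite -(subnK nm) addnE pow_add.
have h1 : (b ^ (m - n) <= 1)%R by rewrite -(pow1 (m - n)); apply: pow_incr; lra.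
have h2 : (0 <= b ^ n)%R by apply: pow_le; lra.
have h3 : (0 <= b ^ (m - n))%R by apply: pow_le; lra.
rewrite -{2}(Rmult_1_l (b ^ n)); apply: Rmult_le_compat_r => //.
Qed.



Lemma pow2_pos n : (0 < 2 ^ n)%R.
Proof. apply: pow_lt; lra. Qed.

Lemma pow2_ge n m : m <= 2 ^ n -> (INR m <= 2 ^ n)%R.
Proof. by move=> h; rewrite -natR2X; apply: natR_le. Qed.

Section Main.
Variables (V : finType) (k d s : nat) (F : cnf V) (B : clause V).
Hypothesis hF1 : forall c, c \in F -> #|vbl c| = k.
Hypothesis hF2 : forall v, #|[set c in F | v \in vbl c]| <= d.
Hypothesis hF3 : forall c1 c2, c1 \in F -> c2 \in F -> c1 != c2 -> #|vbl c1 :&: vbl c2| <= s.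
Hypothesis hB : #|vbl B| = k.
Hypothesis hBF : B \notin F.
Hypothesis hks : s + 10 <= k.
Hypothesis hb : 32 * k * d * 2 ^ s <= 2 ^ k.
Hypothesis hc : (32 * 'C(k, s.+1)) ^ 2 * 2 ^ s <= 2 ^ k.

Local Notation S := (vbl B).
Definition u c := #|Uc B c|.
Definition small c := 2 * u c + s < k.
Definition xw c : R := ((if small c then 4/3 else 4) / 2 ^ u c)%R.
Definition G := [set c in F | ~~ (vbl c \subset S)].
Definition Far := [set c in F | [disjoint vbl c & S]].
Definition Near := G :\: Far.
Definition H := [set j in F | s < #|vbl j :&: S|].

Lemma u_split c : c \in F -> u c + #|vbl c :&: S| = k.
Proof. by move=> cF; rewrite /u /Uc addnC cardsID hF1. Qed.

Lemma small_uniq j1 j2 : j1 \in F -> j2 \in F -> small j1 -> small j2 -> j1 = j2.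
Proof.
move=> j1F j2F s1 s2; apply/eqP; apply/negPn/negP => ne.
have h := hF3 j1F j2F ne.
set A1 := vbl j1 :&: S; set A2 := vbl j2 :&: S.
have h1 : #|A1 :&: A2| <= s.
  apply: leq_trans h; apply: subset_leq_card; apply/subsetP=> v; rewrite !inE.
  by case/andP=> /andP[-> _] /andP[-> _].
have h2 : #|A1 :|: A2| <= k.
  rewrite -hB; apply: subset_leq_card; rewrite subUset; apply/andP; split; apply: subsetIr.
have h3 := cardsUI A1 A2.
have e1 := u_split j1F; have e2 := u_split j2F.
move: s1 s2; rewrite /small -/A1 -/A2 in e1 e2 *.
lia.
Qed.

Lemma G_F c : c \in G -> c \in F.
Proof. by rewrite inE => /andP[]. Qed.

Lemma G_u c : c \in G -> 0 < u c.
Proof.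
rewrite inE => /andP[_ h]; rewrite /u /Uc card_gt0; apply: contra h.
by rewrite setD_eq0.
Qed.

Lemma u_ge5 c : c \in G -> ~~ small c -> 5 <= u c.
Proof. by move=> cG; rewrite /small; lia. Qed.

Lemma xw_ns c : ~~ small c -> xw c = (4 / 2 ^ u c)%R.
Proof. by rewrite /xw => /negbTE ->. Qed.

Lemma xw_b c : c \in G -> (0 <= xw c <= 2/3)%R.
Proof.
move=> cG; have p := pow2_pos (u c).
rewrite /xw; case: ifP => sm.
  have : (2 <= 2 ^ u c)%R.
    by have := pow2_ge (leq_pexp2l (isT : 0 < 2) (G_u cG)); rewrite /=; lra.
  move=> h; split; first by apply: Rmult_le_pos; [lra | apply: Rlt_le; apply: Rinv_0_lt_compat].
  apply: (Rle_trans _ (4/3 / 2)); last lra.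
  by apply: Rmult_le_compat_l; [lra | apply: Rinv_le_contravar; lra].
have : (32 <= 2 ^ u c)%R.
  have := pow2_ge (leq_pexp2l (isT : 0 < 2) (u_ge5 cG (negbT sm))).
  by rewrite (_ : 2 ^ 5 = 32) //= => h; lra.
move=> h; split; first by apply: Rmult_le_pos; [lra | apply: Rlt_le; apply: Rinv_0_lt_compat].
apply: (Rle_trans _ (4 / 32)); last lra.
by apply: Rmult_le_compat_l; [lra | apply: Rinv_le_contravar; lra].
Qed.

Lemma hx : forall c, c \in G -> (0 <= xw c <= 1)%R.
Proof. by move=> c /xw_b; lra. Qed.


Lemma card_Nb c : c \in G -> #|Nb B G c| <= u c * d.
Proof.
move=> cG.
have sub : Nb B G c \subset \bigcup_(v in Uc B c) [set j in F | v \in vbl j].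
  apply/subsetP=> j; rewrite !inE => /andP[/andP[jF _] /andP[_ /existsP[v /andP[vU vj]]]].
  by apply/bigcupP; exists v => //; rewrite inE jF.
apply: leq_trans (subset_leq_card sub) _.
rewrite /u -sum_nat_const.
apply: (big_ind2 (fun (X : {set clause V}) n => #|X| <= n)).
- by rewrite cards0.
- move=> X1 n1 X2 n2 h1 h2; rewrite cardsU; apply: leq_trans (leq_subr _ _) _.
  exact: leq_add.
- by move=> v _; apply: hF2.
Qed.

Definition phi j : {set V} := [set v in take s.+1 (enum (vbl j :&: S))].

Lemma phi_card j : j \in H -> #|phi j| = s.+1.
Proof.
rewrite inE => /andP[_ h]; rewrite /phi cardsE.
have /card_uniqP -> : uniq (take s.+1 (enum (vbl j :&: S))) by apply: take_uniq; apply: enum_uniq.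
by rewrite size_takel // -cardE.
Qed.

Lemma phi_sub j : phi j \subset vbl j :&: S.
Proof.
apply/subsetP=> v; rewrite inE => /mem_take.
by rewrite mem_enum.
Qed.

Lemma card_H : #|H| <= 'C(k, s.+1).
Proof.
have inj : {in H &, injective phi}.
  move=> j1 j2 j1H j2H e; apply/eqP; apply/negPn/negP=> ne.
  have j1F : j1 \in F by move: j1H; rewrite inE => /andP[].
  have j2F : j2 \in F by move: j2H; rewrite inE => /andP[].
  have := hF3 j1F j2F ne.
  have : phi j1 \subset vbl j1 :&: vbl j2.
    rewrite subsetI; apply/andP; split.
      by apply: subset_trans (phi_sub j1) (subsetIl _ _).
    by rewrite e; apply: subset_trans (phi_sub j2) (subsetIl _ _).
  move/subset_leq_card; rewrite phi_card //.
  move=> h1 h2; have := leq_trans h1 h2; by rewrite ltnn.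
rewrite -(card_in_imset inj) -hB -cards_draws.
apply: subset_leq_card; apply/subsetP=> A /imsetP[j jH ->].
rewrite inE phi_card // eqxx andbT.
by apply: subset_trans (phi_sub j) (subsetIr _ _).
Qed.

Lemma sum_bound (A : {set clause V}) N : #|A| <= N ->
  (forall j, j \in A -> xw j = (4 / 2 ^ u j)%R /\ 32 * N <= 2 ^ u j) ->
  (\big[Rplus/0%R]_(j in A) xw j <= 1/8)%R.
Proof.
move=> hA hj.
case: (posnP N) => [N0 | Npos].
  have A0 : #|A| = 0 by move: hA; rewrite N0; case: #|A|.
  apply: (Rle_trans _ (INR #|A| * 0)); last by rewrite A0 /=; lra.
  apply: sum_le_const => j jA.
  by move: (card0_eq A0 j); rewrite jA.
apply: (Rle_trans _ (INR #|A| * (1 / (8 * INR N)))).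
  apply: sum_le_const => j jA.
  have [-> h] := hj j jA.
  have h' := pow2_ge h.
  have NP : (0 < INR N)%R by apply: lt_0_INR; apply/ltP.
  rewrite natRM /= in h'.
  have p := pow2_pos (u j).
  apply: (Rmult_le_reg_r (8 * INR N * 2 ^ u j)); first by nra.
  field_simplify; try lra.
have NP : (0 < INR N)%R by apply: lt_0_INR; apply/ltP.
have := natR_le hA => h.
apply: (Rmult_le_reg_r (8 * INR N)); first lra.
field_simplify; lra.
Qed.


Lemma pow_split : 2 ^ k = 2 ^ (k - s) * 2 ^ s.
Proof. by rewrite -expnD subnK //; lia. Qed.

Lemma kd_bound : 32 * (k * d) <= 2 ^ (k - s).
Proof.
by rewrite -(@leq_pmul2r (2 ^ s)) ?expn_gt0 // -pow_split mulnA.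
Qed.

Lemma C_bound : (32 * 'C(k, s.+1)) ^ 2 <= 2 ^ (k - s).
Proof.
by rewrite -(@leq_pmul2r (2 ^ s)) ?expn_gt0 // -pow_split.
Qed.

Lemma hcond : forall c, c \in G ->
  (1 <= 2 ^ #|Uc B c| * xw c * \big[Rmult/1%R]_(j in Nb B G c) (1 - xw j))%R.
Proof.
move=> c cG.
set Nbc := Nb B G c.
set Sm := [set j | small j].
have NbG : Nbc \subset G by apply/subsetP=> j; rewrite inE => /andP[].
rewrite (big_setID Sm) /=.
set R := Nbc :\: Sm.
have RG : R \subset G by apply: subset_trans (subsetDl _ _) NbG.
have hR : (\big[Rplus/0%R]_(j in R) xw j <= 1/4)%R.
  rewrite (big_setID H) /=.
  have h1 : (\big[Rplus/0%R]_(j in R :&: H) xw j <= 1/8)%R.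
    apply: (@sum_bound _ 'C(k, s.+1)).
      apply: leq_trans card_H; apply: subset_leq_card; apply: subsetIr.
    move=> j /setIP[/setDP[jN nsm] jH]; rewrite inE in nsm.
    split; first by apply: xw_ns.
    rewrite -leq_sqr; apply: leq_trans C_bound _.
    rewrite -expnM mulnC; apply: leq_pexp2l => //.
    move: nsm; rewrite /small; lia.
  have h2 : (\big[Rplus/0%R]_(j in R :\: H) xw j <= 1/8)%R.
    apply: (@sum_bound _ (k * d)).
      apply: (@leq_trans #|Nbc|).
        apply: subset_leq_card; apply: subset_trans (subsetDl _ _) (subsetDl _ _).
      apply: leq_trans (card_Nb cG) _.
      by apply: leq_mul => //; rewrite -(hF1 (G_F cG)) /u /Uc; apply: subset_leq_card; apply: subsetDl.
    move=> j /setDP[/setDP[jN nsm] hH]; rewrite inE in nsm.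
    have jF : j \in F by apply: G_F; apply: (subsetP NbG).
    rewrite inE jF /= -leqNgt in hH.
    split; first by apply: xw_ns.
    apply: leq_trans kd_bound _; apply: leq_pexp2l => //.
    have := u_split jF; move: hH; lia.
  apply: (Rle_trans _ (1/8 + 1/8)); [exact: Rplus_le_compat h1 h2 | lra].
have hRp : (3/4 <= \big[Rmult/1%R]_(j in R) (1 - xw j))%R.
  apply: Rle_trans (prod_ge_sum _) ; first lra.
  by move=> j jR; apply: hx; apply: (subsetP RG).
have hS : ((if small c then 1 else 1/3) <= \big[Rmult/1%R]_(j in Nbc :&: Sm) (1 - xw j))%R.
  case: (set_0Vmem (Nbc :&: Sm)) => [-> | [j jN]].
    rewrite big_set0; case: (small c); lra.
  have jG : j \in G by move: jN; rewrite !inE => /andP[/andP[]].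
  have jsm : small j by move: jN; rewrite !inE => /andP[_].
  have jc : j != c by move: jN; rewrite !inE => /andP[/andP[_ /andP[]]].
  have e : Nbc :&: Sm = [set j].
    apply/setP=> i; rewrite inE; apply/idP/eqP => [iN|->//].
    have iG : i \in G by move: iN; rewrite !inE => /andP[/andP[]].
    have ism : small i by move: iN; rewrite !inE => /andP[_].
    exact: small_uniq (G_F iG) (G_F jG) ism jsm.
  rewrite e big_set1.
  have nsc : ~~ small c.
    apply/negP=> sc; move/eqP: jc; apply; exact: small_uniq (G_F jG) (G_F cG) jsm sc.
  rewrite (negbTE nsc); have := xw_b jG; lra.
have p := pow2_pos (u c).
have ex : (2 ^ #|Uc B c| * xw c = if small c then 4/3 else 4)%R.
  rewrite /xw -/(u c); case: (small c); field; lra.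
rewrite ex.
set P1 := \big[Rmult/1%R]_(i in Nbc :&: Sm) (1 - xw i)%R in hS *.
set P2 := \big[Rmult/1%R]_(i in R) (1 - xw i)%R in hRp *.
move: hS; case: (small c) => hS.
  apply: (Rle_trans _ (4/3 * (1 * (3/4)))); first lra.
  apply: Rmult_le_compat_l; first lra.
  apply: Rmult_le_compat; lra.
apply: (Rle_trans _ (4 * (1/3 * (3/4)))); first lra.
apply: Rmult_le_compat_l; first lra.
apply: Rmult_le_compat; lra.
Qed.

Lemma sat_okG a : violates B a -> satisfies F a = okT G a.
Proof.
move=> vB; apply/forallP/forallP => h c; apply/implyP => cin.
  by move: (h c); rewrite (G_F cin).
case cG : (c \in G); first by move: (h c); rewrite cG.
move: cG; rewrite inE cin /= => /negbFE sub.
have eV : vbl c = S.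
  by apply/eqP; rewrite eqEcard sub hB hF1 // leqnn.
have cB : c != B by apply: contraNneq hBF => <-.
have [v hv] : exists v, c v != B v.
  case: (boolP [exists v, c v != B v]) => [/existsP[v hv]|/existsPn hh]; first by exists v.
  by move/eqP: cB; case; apply/ffunP=> v; move: (hh v); rewrite negbK => /eqP.
have hv' : v \in vbl c = (v \in S) by rewrite eV.
apply/negP => /forallP /(_ v) vc.
move/forallP: vB => /(_ v) vb.
move: hv' hv vc vb; rewrite /vbl !inE.
by case: (c v) => [b1|]; case: (B v) => [b2|] //= _ ne /eqP e1 /eqP e2; move: ne; rewrite -e1 -e2 eqxx.
Qed.

Lemma Far_G : Far \subset G.
Proof.
apply/subsetP=> c; rewrite !inE => /andP[cF dis]; rewrite cF /=.
apply/negP=> sub.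
have : vbl c = set0.
  by move: dis; rewrite -setI_eq0 (setIidPl sub) => /eqP.
move=> e; have := hF1 cF; rewrite e cards0; lia.
Qed.

Lemma Near_Far : Near :|: Far = G.
Proof.
apply/setP=> c; rewrite /Near in_setU in_setD.
case cF: (c \in Far); last by rewrite /= orbF.
by rewrite orbT (subsetP Far_G c cF).
Qed.

Lemma Near_G : Near \subset G.
Proof. exact: subsetDl. Qed.

Lemma card_Near : #|Near| <= k * d.
Proof.
have sub : Near \subset \bigcup_(v in S) [set c in F | v \in vbl c].
  apply/subsetP=> c /setDP[cG cnF].
  have cF := G_F cG.
  move: cnF; rewrite inE cF /= -setI_eq0 => /set0Pn [v]; rewrite inE => /andP[vc vS].
  by apply/bigcupP; exists v => //; rewrite inE cF.
apply: leq_trans (subset_leq_card sub) _.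
rewrite -hB; apply: card_bigcup_le => v _; apply: hF2.
Qed.

Definition sgB : assignment V := [ffun v => if B v is Some b then b else false].

Lemma mu_far : (INR #|[set a | okT Far a]| = 2 ^ k * mu B (okT Far))%R.
Proof.
have hE : inv_on S [set a | okT Far a].
  move=> a b hab; rewrite !inE.
  apply/forallP/forallP=> h j; apply/implyP=> jF; move: (h j); rewrite jF /=;
  rewrite (@violates_agree _ j a b) // => v vj; apply: hab; apply/negP=> vS;
  move: jF; rewrite inE => /andP[_]; rewrite disjoints_subset => /subsetP /(_ v vj);
  by rewrite inE vS.
have := cyl_count sgB hB hE.
move=> <-; rewrite natRM natR2X /mu; congr (_ * INR _)%R; congr #|pred_of_set _|.
apply/setP=> a; rewrite !inE; congr andb.
by apply/forallP/forallP => h v; move: (h v); rewrite ffunE /vbl inE; case: (B v).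
Qed.

Definition theta_k : R := ((1/3) ^ (k * 2 ^ k) / 2 ^ k)%R.

Lemma main_bound : 0 < #|[set a | satisfies F a]| -> (theta_k <= prob_violate F B)%R.
Proof.
move=> pos.
have hnum : INR #|[set a | satisfies F a && violates B a]| = mu B (okT G).
  rewrite /mu; congr INR; congr #|pred_of_set _|; apply/setP=> a; rewrite !inE.
  by case vB: (violates B a); rewrite ?andbF ?andbT // sat_okG.
have dNF : [disjoint Near & Far] by rewrite disjoints_subset /Near setDE subsetIr.
have hl := lll_prod hx hcond Near_G Far_G dNF.
rewrite Near_Far in hl.
have mf := mu_far.
have hden : #|[set a | satisfies F a]| <= #|[set a | okT Far a]|.
  apply: subset_leq_card; apply/subsetP=> a; rewrite !inE => /forallP h.
  apply/forallP=> c; apply/implyP=> cF; move: (h c); rewrite (G_F (subsetP Far_G c cF)).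
  by [].
have hP : ((1/3) ^ #|Near| <= \big[Rmult/1%R]_(j in Near) (1 - xw j))%R.
  apply: prod_ge_pow; first lra.
  by move=> j jN; have := xw_b (subsetP Near_G j jN); lra.
have d2 : d <= 2 ^ k.
  apply: leq_trans hb; rewrite [32 * k * d]mulnC -!mulnA; apply: leq_pmulr.
  rewrite !muln_gt0 expn_gt0 /= andbT; apply/ltP; lia.
have hq : ((1/3) ^ (k * 2 ^ k) <= (1/3) ^ #|Near|)%R.
  apply: pow_anti; first lra.
  by apply: leq_trans card_Near _; apply: leq_mul.
rewrite /prob_violate hnum.
set den := INR #|[set a | satisfies F a]|.
have dpos : (0 < den)%R by apply: lt_0_INR; apply/ltP.
have hd := natR_le hden; rewrite -/den in hd.
rewrite mf in hd.
set P := \big[Rmult/1%R]_(j in Near) (1 - xw j)%R in hP hl.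
set m := mu B (okT Far) in hl hd.
set q := ((1/3) ^ (k * 2 ^ k))%R in hq.
have p := pow2_pos k.
have q0 : (0 <= q)%R by apply: pow_le; lra.
have m0 : (0 <= m)%R by apply: mu_ge0.
apply: (Rmult_le_reg_r den) => //.
rewrite /Rdiv Rmult_assoc Rinv_l ?Rmult_1_r; last lra.
rewrite /theta_k -/q.
apply: (Rle_trans _ (q * m)).
  apply: (Rle_trans _ (q / 2 ^ k * (2 ^ k * m))).
    apply: Rmult_le_compat_l => //; apply: Rmult_le_pos => //; apply: Rlt_le; apply: Rinv_0_lt_compat; lra.
  right; field; lra.
apply: Rle_trans hl.
apply: Rmult_le_compat_r => //; lra.
Qed.

End Main.

Lemma resilient_core (V : finType) (k d s : nat) (F : cnf V) :
  is_kds_cnf k d s F -> s + 10 <= k -> 32 * k * d * 2 ^ s <= 2 ^ k ->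
  (32 * 'C(k, s.+1)) ^ 2 * 2 ^ s <= 2 ^ k -> resilient k (theta_k k) F.
Proof.
move=> [h1 [h2 h3]] hks hb hc B hB hBF.
case: (posnP #|[set a | satisfies F a]|) => [z|pos].
  left; rewrite /prob_violate z.
  have -> : #|[set x | satisfies F x && violates B x]| = 0.
    apply/eqP; rewrite -leqn0 -z; apply: subset_leq_card; apply/subsetP=> a.
    by rewrite !inE => /andP[].
  by rewrite /= /Rdiv Rmult_0_l.
by right; apply: (main_bound h1 h2 h3 hB hBF hks hb hc pos).
Qed.



Lemma bin_le_exp n m : 'C(n, m) <= n ^ m.
Proof.
elim: n m => [|n IH] [|m] //.
rewrite binS expnS.
have h1 : n ^ m <= n.+1 ^ m by case: m {IH} => [|m] //; rewrite leq_exp2r.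
have h2 := IH m.+1; have h3 := IH m.
rewrite expnS in h2.
apply: leq_trans (leq_add h2 (leq_trans h3 h1)) _.
by rewrite mulSn addnC leq_add2l leq_mul2l h1 orbT.
Qed.

Lemma natRX a n : INR (a ^ n) = (INR a ^ n)%R.
Proof. elim: n => [|n IH]; first by rewrite expn0. by rewrite expnS natRM IH. Qed.

Lemma ln0 : ln 0 = 0%R.
Proof. unfold ln; destruct (Rlt_dec 0 0) as [h|h]; [exfalso; exact (Rlt_irrefl 0 h)|reflexivity]. Qed.

Lemma ln_ge0 x : (1 <= x)%R -> (0 <= ln x)%R.
Proof.
move=> h; case: (Rle_lt_or_eq_dec _ _ h) => [lt|<-]; last by rewrite ln_1; lra.
by rewrite -ln_1; apply: Rlt_le; apply: ln_increasing; lra.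
Qed.

Lemma ln2_pos : (0 < ln 2)%R.
Proof. rewrite -ln_1; apply: ln_increasing; lra. Qed.

Lemma log2_ge0 n : (0 <= log2 (INR n))%R.
Proof.
rewrite /log2; case: n => [|n]; first by rewrite /= ln0; lra.
have := ln2_pos; have : (1 <= INR n.+1)%R by apply: (natR_le (m:=1)).
move=> h1 h2; apply: Rmult_le_pos; first by apply: ln_ge0.
by apply: Rlt_le; apply: Rinv_0_lt_compat.
Qed.

Lemma Rpower2_log2 x : (0 < x)%R -> Rpower 2 (log2 x) = x.
Proof.
move=> h; rewrite /Rpower /log2; have := ln2_pos => h2.
rewrite (_ : (ln x / ln 2 * ln 2 = ln x)%R); last by field; lra.
by apply: exp_ln.
Qed.

Lemma Rpower2_nat n : Rpower 2 (INR n) = INR (2 ^ n).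
Proof. by rewrite Rpower_pow ?natR2X //; lra. Qed.

Lemma Rpower_pos a b : (0 < Rpower a b)%R.
Proof. exact: exp_pos. Qed.

Definition Lg (k : nat) := log2 (INR k).
Definition sig eta (k : nat) := Rpower (INR k) (1 - eta).
Definition fdef eta (k : nat) : R :=
  if Rle_dec (10 + 2 * (sig eta k + 1) * Lg k + sig eta k) (INR k)
  then (5 + Lg k + sig eta k)%R else (INR k + 1)%R.

Lemma Rpower2_Lgm k m : 0 < k -> Rpower 2 (Lg k * INR m) = INR (k ^ m).
Proof.
move=> kp; have kR : (0 < INR k)%R by apply: lt_0_INR; apply/ltP.
by rewrite -Rpower_mult Rpower2_log2 // Rpower_pow // natRX.
Qed.

Lemma partA eta k d s : (0 < eta < 1)%R ->
  (INR s <= sig eta k)%R -> (INR k >= log2 (INR d) + fdef eta k + 0)%R ->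
  [/\ s + 10 <= k, 32 * k * d * 2 ^ s <= 2 ^ k & (32 * 'C(k, s.+1)) ^ 2 * 2 ^ s <= 2 ^ k].
Proof.
move=> he hs; rewrite /fdef; case: Rle_dec => hP /= hk; last first.
  by have := log2_ge0 d; lra.
have sg0 : (0 <= sig eta k)%R by apply: Rlt_le; apply: Rpower_pos.
have L0 : (0 <= Lg k)%R by apply: log2_ge0.
have ld0 := log2_ge0 d.
have s0 := pos_INR s.
have hs10 : s + 10 <= k.
  apply/leP; apply: INR_le; rewrite natRD /=.
  have : (0 <= 2 * (sig eta k + 1) * Lg k)%R by apply: Rmult_le_pos; lra.
  lra.
have kp : 0 < k by lia.
have kR : (0 < INR k)%R by apply: lt_0_INR; apply/ltP.
split => //.
  case: (posnP d) => [->|dp]; first by rewrite muln0 mul0n.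
  have dR : (0 < INR d)%R by apply: lt_0_INR; apply/ltP.
  apply/leP; apply: INR_le.
  rewrite -Rpower2_nat.
  have -> : INR (32 * k * d * 2 ^ s) = Rpower 2 (5 + Lg k + log2 (INR d) + INR s).
    rewrite (Rpower_plus (5 + Lg k + log2 (INR d))) (Rpower_plus (5 + Lg k)) (Rpower_plus 5).
    rewrite Rpower2_nat /Lg !Rpower2_log2 //.
    rewrite (_ : 5%R = INR 5); last by simpl; lra.
    by rewrite Rpower2_nat !natRM.
  apply: Rle_Rpower; lra.
apply: leq_trans (_ : (32 * k ^ s.+1) ^ 2 * 2 ^ s <= _).
  by apply: leq_mul => //; rewrite leq_sqr leq_mul2l bin_le_exp orbT.
apply/leP; apply: INR_le.
rewrite -Rpower2_nat.
have -> : INR ((32 * k ^ s.+1) ^ 2 * 2 ^ s) = Rpower 2 (10 + Lg k * INR (2 * s.+1) + INR s).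
  rewrite (Rpower_plus (10 + Lg k * INR (2 * s.+1))) (Rpower_plus 10) Rpower2_Lgm // Rpower2_nat.
  rewrite (_ : 10%R = INR 10); last by simpl; lra.
  rewrite Rpower2_nat -!natRM; congr INR.
  by rewrite expnMn -expnM (mulnC s.+1) (_ : 2 ^ 10 = 32 ^ 2).
apply: Rle_Rpower; first lra.
rewrite natRM (_ : INR 2 = 2%R); last by simpl; lra.
rewrite S_INR.
have h2 : (2 * (INR s + 1) * Lg k <= 2 * (sig eta k + 1) * Lg k)%R.
  by apply: Rmult_le_compat_r => //; lra.
nra.
Qed.

Section Asym.
Variable eta : R.
Hypothesis he : (0 < eta < 1)%R.

Definition yk (k : nat) := Rpower (INR k) (eta / 2).
Definition cc := (2 / (eta * ln 2))%R.

Lemma cc_pos : (0 < cc)%R.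
Proof.
have := ln2_pos => h; rewrite /cc; apply: Rdiv_lt_0_compat; first lra.
by apply: Rmult_lt_0_compat; lra.
Qed.

Section K.
Variable k : nat.
Hypothesis hk : 0 < k.
Let K := INR k.
Lemma K1 : (1 <= K)%R. Proof. exact: (natR_le (m:=1)). Qed.
Lemma Kpos : (0 < K)%R. Proof. have := K1; lra. Qed.

Lemma yb1 : (1 <= yk k)%R.
Proof.
rewrite /yk -(Rpower_O K Kpos); apply: Rle_Rpower; first exact: K1.
lra.
Qed.

Lemma yy : (yk k * yk k <= K)%R.
Proof.
rewrite /yk -Rpower_plus -[X in (_ <= X)%R](Rpower_1 K Kpos); apply: Rle_Rpower; first exact: K1.
lra.
Qed.

Lemma sy : (sig eta k * yk k * yk k = K)%R.
Proof.
rewrite /yk /sig -!Rpower_plus -[X in (_ = X)%R](Rpower_1 K Kpos); congr Rpower; lra.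
Qed.

Lemma Lgb : (Lg k <= cc * yk k)%R.
Proof.
have h2 := ln2_pos.
have hy : (ln (yk k) <= yk k)%R.
  have := exp_ineq1_le (ln (yk k)); rewrite exp_ln; last by apply: Rpower_pos.
  lra.
have e : ln (yk k) = (eta / 2 * ln K)%R by rewrite /yk ln_Rpower.
rewrite /Lg /log2 /cc -/K.
have -> : (ln K = 2 / eta * ln (yk k))%R by rewrite e; field; lra.
apply: (Rmult_le_reg_r (ln 2)) => //.
have -> : (2 / eta * ln (yk k) / ln 2 * ln 2 = 2 / eta * ln (yk k))%R by field; lra.
have -> : (2 / (eta * ln 2) * yk k * ln 2 = 2 / eta * yk k)%R by field; lra.
apply: Rmult_le_compat_l => //; apply: Rlt_le; apply: Rdiv_lt_0_compat; lra.
Qed.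

Lemma Pc_big : (11 + 4 * cc <= yk k)%R ->
  (10 + 2 * (sig eta k + 1) * Lg k + sig eta k <= K)%R.
Proof.
move=> hy.
have y1 := yb1; have e := sy; have L := Lgb; have c0 := cc_pos.
have L0 : (0 <= Lg k)%R by apply: log2_ge0.
have s0 : (0 <= sig eta k)%R by apply: Rlt_le; apply: Rpower_pos.
have s1 : (1 <= sig eta k)%R.
  have := yy; rewrite -e => h.
  have yp : (0 < yk k * yk k)%R by nra.
  nra.
set y := yk k in y1 e L hy s1 *; set sg := sig eta k in e s0 s1 *; set l := Lg k in L L0 *.
have h1 : (10 + 2 * (sg + 1) * l + sg <= sg * (11 + 4 * cc * y))%R by nra.
have h2 : (sg * (11 + 4 * cc * y) <= sg * y * (11 + 4 * cc))%R by nra.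
have h3 : (sg * y * (11 + 4 * cc) <= sg * y * y)%R.
  by apply: Rmult_le_compat_l => //; nra.
lra.
Qed.

Lemma g_bound : (5 + Lg k + sig eta k <= (6 + cc) * sig eta k * yk k)%R.
Proof.
have y1 := yb1; have e := sy; have L := Lgb; have c0 := cc_pos.
have s1 : (1 <= sig eta k)%R.
  have := yy; rewrite -e => h.
  have yp : (0 < yk k * yk k)%R by nra.
  nra.
set y := yk k in y1 L *; set sg := sig eta k in s1 *.
have h1 : (1 <= sg * y)%R by nra.
have h2 : (cc * y <= cc * sg * y)%R.
  have : (0 <= cc * y * (sg - 1))%R by apply: Rmult_le_pos; nra.
  nra.
have h3 : (sg <= sg * y)%R by nra.
nra.
Qed.
End K.

Lemma nat_unbounded r : exists N : nat, (r < INR N)%R.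
Proof.
have [h1 _] := archimed r.
case: (Z_lt_le_dec (up r) 0) => hz.
  exists 0; have : (IZR (up r) < 0)%R by apply: IZR_lt. simpl; lra.
exists (Z.to_nat (up r)); rewrite INR_IZR_INZ Z2Nat.id //.
Qed.

Lemma f_cv : Un_cv (fun k => fdef eta k / INR k)%R 0%R.
Proof.
move=> eps epos.
have c0 := cc_pos.
set M := Rmax (11 + 4 * cc) (2 * (6 + cc) / eps).
have M1 : (11 + 4 * cc <= M)%R by apply: Rmax_l.
have M2 : (2 * (6 + cc) / eps <= M)%R by apply: Rmax_r.
have [N hN] := nat_unbounded (Rpower M (2 / eta)).
exists N => n /leP nN.
have Mp : (0 < M)%R by lra.
have hn : (Rpower M (2 / eta) < INR n)%R by apply: Rlt_le_trans hN (natR_le nN).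
have RM1 : (1 <= Rpower M (2 / eta))%R.
  rewrite -(Rpower_O M Mp); apply: Rle_Rpower; first lra.
  apply: Rlt_le; apply: Rdiv_lt_0_compat; lra.
have np : 0 < n by apply/ltP; apply: INR_lt; simpl; lra.
have yM : (M <= yk n)%R.
  rewrite /yk -{1}(Rpower_1 M Mp) (_ : 1%R = (2 / eta) * (eta / 2))%R; last by field; lra.
  rewrite -Rpower_mult; apply: Rle_Rpower_l; first lra.
  split; [apply: Rpower_pos | lra].
have hP := Pc_big np (Rle_trans _ _ _ M1 yM).
rewrite /fdef; destruct (Rle_dec _ _) as [h0|hP']; last by exfalso; apply: hP'; exact: hP.
rewrite /=.
have g := g_bound np.
have e := sy np.
have y1 := yb1 np.
have Kp := Kpos np.
have L0 : (0 <= Lg n)%R by apply: log2_ge0.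
have s0 : (0 <= sig eta n)%R by apply: Rlt_le; apply: Rpower_pos.
rewrite /R_dist Rminus_0_r Rabs_pos_eq; last first.
  apply: Rmult_le_pos; first lra.
  by apply: Rlt_le; apply: Rinv_0_lt_compat.
set y := yk n in yM e y1 g *; set sg := sig eta n in g e s0 *.
rewrite -e.
have yp : (0 < y)%R by lra.
have sp : (0 < sg)%R.
  have : (0 < sg * y * y)%R by rewrite e.
  move=> h; nra.
apply: (Rle_lt_trans _ ((6 + cc) / y)).
  apply: (Rmult_le_reg_r (sg * y * y)); first nra.
  rewrite /Rdiv Rmult_assoc Rinv_l; last nra.
  rewrite Rmult_1_r.
  have -> : ((6 + cc) * / y * (sg * y * y) = (6 + cc) * sg * y)%R by field; lra.
  exact: g.
apply: (Rmult_lt_reg_r y) => //.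
have -> : ((6 + cc) / y * y = 6 + cc)%R by field; lra.
have : (2 * (6 + cc) <= eps * y)%R.
  have := M2; move=> h.
  have : (2 * (6 + cc) / eps * eps <= M * eps)%R by apply: Rmult_le_compat_r; lra.
  have -> : (2 * (6 + cc) / eps * eps = 2 * (6 + cc))%R by field; lra.
  nra.
nra.
Qed.
End Asym.

Theorem lemma3p1 :
  forall eta : R, (0 < eta < 1)%R ->
  exists (f : nat -> R) (C : R),
    Un_cv (fun k => f k / INR k)%R 0%R /\
    exists theta : nat -> R, (forall k, 0 < theta k)%R /\
      forall (k d s : nat),
        (INR s <= Rpower (INR k) (1 - eta))%R ->
        (Rpower 2 (2 / eta) <= INR k)%R ->
        (INR k >= log2 (INR d) + f k + C)%R ->
        forall (V : finType) (F : cnf V),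
          is_kds_cnf k d s F -> resilient k (theta k) F.
Proof.
move=> eta he.
exists (fdef eta), 0%R; split; first exact: f_cv.
exists theta_k; split.
  move=> k; rewrite /theta_k; apply: Rdiv_lt_0_compat; apply: pow_lt; lra.
move=> k d s hs _ hk V F hF.
have [h1 h2 h3] := partA he hs hk.
exact: resilient_core hF h1 h2 h3.
Qed.
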